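(* For every integer $n\ge1$, let $G_n=H_1\vee H_2\vee\cdots\vee H_n$ be a simple complete multipartite graph where each $H_i$ is an independent set with $s_i>(n-1)^2$ vertices. Then for every prime power $q$, $\operatorname{mr}(\mathbb{F}_q,G_n)\le 3$ if and only if $q\ge n-1$.
   Context: $\vee$ denotes the join: the disjoint union together with all edges between vertices of different constituents. For a field $F$ and a simple graph $G$ on vertices $\{1,\dots,n\}$, $S(F,G)$ is the set of symmetric $n\times n$ matrices $A$ over $F$ with $a_{ij}\neq 0$ for $i\ne j$ iff $ij$ is an edge of $G$ (diagonal entries unrestricted), and $\operatorname{mr}(F,G)=\min\{\operatorname{rank}A: A\in S(F,G)\}$. *)

(* Defs.v *)
From HB Require Import structures.
From mathcomp Require Import all_boot all_order all_algebra all_field.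
Set Implicit Arguments. Unset Strict Implicit. Unset Printing Implicit Defensive.
Import GRing.Theory.
Local Open Scope ring_scope.

(* A simple graph on a finite vertex type V is given by a symmetric,
   irreflexive relation adj : rel V.  Vertices are numbered 0..#|V|-1
   through enum_val, so matrices are indexed by 'I_#|V|. *)

Definition inS (F : fieldType) (V : finType) (adj : rel V)
    (A : 'M[F]_#|V|) : bool :=
  (A^T == A) &&
  [forall i, forall j, (i != j) ==> ((A i j != 0) == adj (enum_val i) (enum_val j))].

(* mr(F,G) = min { rank A : A in S(F,G) }, for a finite field F
   (the default #|V| is never reached for a simple graph, since S is nonempty). *)
Definition mr (F : finFieldType) (V : finType) (adj : rel V) : nat :=
  \big[minn/#|V|]_(A : 'M[F]_#|V| | inS adj A) \rank A.

Definition cmp_vertex (n : nat) (s : 'I_n -> nat) : finType :=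
  {i : 'I_n & 'I_(s i)}.

Definition cmp_adj (n : nat) (s : 'I_n -> nat) : rel (cmp_vertex s) :=
  fun u v => tag u != tag v.

(* Main.v *)
Require Import Defs.
From HB Require Import structures.
From mathcomp Require Import all_boot all_order all_algebra all_field.
From Stdlib Require Import Ring.
Set Implicit Arguments. Unset Strict Implicit. Unset Printing Implicit Defensive.
Import GRing.Theory.
Local Open Scope ring_scope.

Section Gen.
Variables (R : Type) (z o : R) (ad mu : R -> R -> R) (op : R -> R).
Hypothesis RT : @ring_theory R z o ad mu (fun x y => ad x (op y)) op (@eq R).
Add Ring Rr : RT.
Local Notation "x +' y" := (ad x y) (at level 50, left associativity).
Local Notation "x *' y" := (mu x y) (at level 40, left associativity).
Local Notation "x -' y" := (ad x (op y)) (at level 50, left associativity).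

Lemma gsq t u : o *' (u *' u) +' (t *' op ((o +' o) *' u) +' (t *' t *' o +' z))
   = (t -' u) *' (t -' u).
Proof. ring. Qed.

Lemma gsym t u : (t -' u) *' (t -' u) = (u -' t) *' (u -' t).
Proof. ring. Qed.

Lemma gpf (v0 v1 v2 v3 q00 q01 q02 q03 q10 q11 q12 q13 q20 q21 q22 q23 q30 q31 q32 q33 : R) :
  o +' o = z ->
  q00 = z -> q11 = z -> q22 = z -> q33 = z ->
  q10 = q01 -> q20 = q02 -> q30 = q03 -> q21 = q12 -> q31 = q13 -> q32 = q23 ->
  v0 *' q00 +' (v1 *' q10 +' (v2 *' q20 +' (v3 *' q30 +' z))) = z ->
  v0 *' q01 +' (v1 *' q11 +' (v2 *' q21 +' (v3 *' q31 +' z))) = z ->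
  v0 *' q02 +' (v1 *' q12 +' (v2 *' q22 +' (v3 *' q32 +' z))) = z ->
  v0 *' q03 +' (v1 *' q13 +' (v2 *' q23 +' (v3 *' q33 +' z))) = z ->
  let P := q01 *' q23 +' q02 *' q13 +' q03 *' q12 in
  [/\ v0 *' P = z, v1 *' P = z, v2 *' P = z & v3 *' P = z].
Proof.
move=> H2 d0 d1 d2 d3 s10 s20 s30 s21 s31 s32 E0 E1 E2 E3 P.
have C0 : v1 *' q01 +' v2 *' q02 +' v3 *' q03 = z.
  by rewrite -E0 d0 s10 s20 s30; ring.
have C1 : v0 *' q01 +' v2 *' q12 +' v3 *' q13 = z.
  by rewrite -E1 d1 s21 s31; ring.
have C2 : v0 *' q02 +' v1 *' q12 +' v3 *' q23 = z.
  by rewrite -E2 d2 s32; ring.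
have C3 : v0 *' q03 +' v1 *' q13 +' v2 *' q23 = z.
  by rewrite -E3 d3; ring.
have T : forall x, x +' x = z by move=> x; transitivity ((o +' o) *' x); [ring | rewrite H2; ring].
split.
- transitivity (q23 *' (v0 *' q01 +' v2 *' q12 +' v3 *' q13) +' q13 *' (v0 *' q02 +' v1 *' q12 +' v3 *' q23)
     +' q12 *' (v0 *' q03 +' v1 *' q13 +' v2 *' q23) +' op ((v1 *' q12 *' q13 +' v2 *' q12 *' q23 +' v3 *' q13 *' q23) +' (v1 *' q12 *' q13 +' v2 *' q12 *' q23 +' v3 *' q13 *' q23))).
    rewrite /P; ring.
  by rewrite C1 C2 C3 T; ring.
- transitivity (q23 *' (v1 *' q01 +' v2 *' q02 +' v3 *' q03) +' q03 *' (v0 *' q02 +' v1 *' q12 +' v3 *' q23)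
     +' q02 *' (v0 *' q03 +' v1 *' q13 +' v2 *' q23) +' op ((v0 *' q02 *' q03 +' v2 *' q02 *' q23 +' v3 *' q03 *' q23) +' (v0 *' q02 *' q03 +' v2 *' q02 *' q23 +' v3 *' q03 *' q23))).
    rewrite /P; ring.
  by rewrite C0 C2 C3 T; ring.
- transitivity (q13 *' (v1 *' q01 +' v2 *' q02 +' v3 *' q03) +' q03 *' (v0 *' q01 +' v2 *' q12 +' v3 *' q13)
     +' q01 *' (v0 *' q03 +' v1 *' q13 +' v2 *' q23) +' op ((v1 *' q01 *' q13 +' v3 *' q03 *' q13 +' v0 *' q01 *' q03) +' (v1 *' q01 *' q13 +' v3 *' q03 *' q13 +' v0 *' q01 *' q03))).
    rewrite /P; ring.
  by rewrite C0 C1 C3 T; ring.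
- transitivity (q12 *' (v1 *' q01 +' v2 *' q02 +' v3 *' q03) +' q02 *' (v0 *' q01 +' v2 *' q12 +' v3 *' q13)
     +' q01 *' (v0 *' q02 +' v1 *' q12 +' v3 *' q23) +' op ((v1 *' q01 *' q12 +' v2 *' q02 *' q12 +' v0 *' q01 *' q02) +' (v1 *' q01 *' q12 +' v2 *' q02 *' q12 +' v0 *' q01 *' q02))).
    rewrite /P; ring.
  by rewrite C0 C1 C2 T; ring.
Qed.

Lemma gr3 (v0 v1 v2 q00 q01 q02 q10 q11 q12 q20 q21 q22 : R) :
  q00 = z -> q11 = z -> q22 = z ->
  q10 = q01 -> q20 = q02 -> q21 = q12 ->
  v0 *' q00 +' (v1 *' q10 +' (v2 *' q20 +' z)) = z ->
  v0 *' q01 +' (v1 *' q11 +' (v2 *' q21 +' z)) = z ->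
  v0 *' q02 +' (v1 *' q12 +' (v2 *' q22 +' z)) = z ->
  [/\ (o +' o) *' q01 *' q02 *' v0 = z, (o +' o) *' q01 *' q12 *' v1 = z
    & (o +' o) *' q02 *' q12 *' v2 = z].
Proof.
move=> d0 d1 d2 s10 s20 s21 E0 E1 E2.
have C0 : v1 *' q01 +' v2 *' q02 = z by rewrite -E0 d0 s10 s20; ring.
have C1 : v0 *' q01 +' v2 *' q12 = z by rewrite -E1 d1 s21; ring.
have C2 : v0 *' q02 +' v1 *' q12 = z by rewrite -E2 d2; ring.
split.
- transitivity (q02 *' (v0 *' q01 +' v2 *' q12) +' q01 *' (v0 *' q02 +' v1 *' q12)
     +' op (q12 *' (v1 *' q01 +' v2 *' q02))); first ring.
  by rewrite C0 C1 C2; ring.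
- transitivity (q12 *' (v1 *' q01 +' v2 *' q02) +' q01 *' (v0 *' q02 +' v1 *' q12)
     +' op (q02 *' (v0 *' q01 +' v2 *' q12))); first ring.
  by rewrite C0 C1 C2; ring.
- transitivity (q12 *' (v1 *' q01 +' v2 *' q02) +' q02 *' (v0 *' q01 +' v2 *' q12)
     +' op (q01 *' (v0 *' q02 +' v1 *' q12))); first ring.
  by rewrite C0 C1 C2; ring.
Qed.

Lemma god0 a b c ak bk gk :
  ak *' (bk *' a +' gk *' b) +' bk *' (ak *' a +' gk *' c) +' gk *' (ak *' b +' bk *' c)
  = (o +' o) *' (a *' ak *' bk +' b *' ak *' gk +' c *' bk *' gk).
Proof. ring. Qed.

Lemma god1 a b bk gk bl gl mk ml :
  mk = bk *' a +' gk *' b -> ml = bl *' a +' gl *' b -> bk *' ml = bl *' mk ->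
  b *' (gk *' ml -' gl *' mk) = z.
Proof.
move=> Hmk Hml Hb.
transitivity (a *' (bl *' mk -' bk *' ml)); first by rewrite Hmk Hml; ring.
by rewrite Hb; ring.
Qed.

Lemma god2 a b c ak bk gk al bl gl mk ml :
  a *' ak *' bk +' b *' ak *' gk +' c *' bk *' gk = z ->
  a *' al *' bl +' b *' al *' gl +' c *' bl *' gl = z ->
  mk = bk *' a +' gk *' b -> ml = bl *' a +' gl *' b ->
  bk *' ml = bl *' mk -> gk *' ml = gl *' mk ->
  mk *' ml *' (ak *' ml -' al *' mk) = z.
Proof.
move=> Zk Zl Hmk Hml Hb Hg.
transitivity (ml *' ml *' (a *' ak *' bk +' b *' ak *' gk +' c *' bk *' gk)
  -' mk *' mk *' (a *' al *' bl +' b *' al *' gl +' c *' bl *' gl)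
  -' c *' ((bk *' ml) *' (gk *' ml) -' (bl *' mk) *' (gl *' mk))).
  by rewrite Hmk Hml; ring.
by rewrite Zk Zl Hb Hg; ring.
Qed.

Lemma god3 a b c ak bk gk al bl gl mk ml :
  ak *' ml = al *' mk -> bk *' ml = bl *' mk -> gk *' ml = gl *' mk ->
  ak *' (bk *' a +' gk *' b) +' bk *' (ak *' a +' gk *' c) +' gk *' (ak *' b +' bk *' c) = z ->
  mk *' (ak *' (bl *' a +' gl *' b) +' bk *' (al *' a +' gl *' c) +' gk *' (al *' b +' bl *' c)) = z.
Proof.
move=> Ha Hb Hg Hkk.
transitivity (ml *' (ak *' (bk *' a +' gk *' b) +' bk *' (ak *' a +' gk *' c) +' gk *' (ak *' b +' bk *' c))
  +' (a *' bk +' b *' gk) *' (al *' mk -' ak *' ml)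
  +' (a *' ak +' c *' gk) *' (bl *' mk -' bk *' ml)
  +' (b *' ak +' c *' bk) *' (gl *' mk -' gk *' ml)); first ring.
by rewrite Hkk -Ha -Hb -Hg; ring.
Qed.

End Gen.

Lemma Fring (F : comNzRingType) :
  @ring_theory F 0 1 +%R *%R (fun x y => x - y) -%R (@eq F).
Proof.
constructor=> //. exact: add0r. exact: addrC. exact: addrA. exact: mul1r.
exact: mulrC. exact: mulrA. exact: mulrDl. exact: subrr.
Qed.

Lemma rank_mxsub (F : fieldType) m n m' n' (f : 'I_m' -> 'I_m) (g : 'I_n' -> 'I_n)
  (A : 'M[F]_(m, n)) : (\rank (mxsub f g A) <= \rank A)%N.
Proof.
have -> : mxsub f g A = mxsub f g (1%:M *m A) by rewrite mul1mx.
rewrite mxsub_mul; apply: leq_trans (mxrankM_maxr _ _) _.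
have -> : mxsub id g A = mxsub id g (A *m 1%:M) by rewrite mulmx1.
rewrite mxsub_mul mxsub_id; exact: mxrankM_maxl.
Qed.

Lemma bigminn_le (I : eqType) (r : seq I) (P : pred I) (F : I -> nat) x0 j :
  j \in r -> P j -> (\big[minn/x0]_(i <- r | P i) F i <= F j)%N.
Proof.
elim: r => //= i r ih; rewrite inE big_cons => /orP [/eqP -> Pj | /ih h Pj].
  by rewrite Pj geq_minl.
by case: ifP => _; [apply: leq_trans (geq_minr _ _) (h Pj) | exact: h].
Qed.

Lemma mr_le (F : finFieldType) (V : finType) (adj : rel V) (A : 'M[F]_#|V|) :
  inS adj A -> (mr F adj <= \rank A)%N.
Proof. by move=> HA; rewrite /mr; apply: bigminn_le (mem_index_enum A) HA. Qed.

Lemma mr_cases (F : finFieldType) (V : finType) (adj : rel V) :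
  mr F adj = #|V| \/ exists A : 'M[F]_#|V|, inS adj A /\ mr F adj = \rank A.
Proof.
rewrite /mr; apply: (big_ind (fun x => x = #|V| \/ exists A : 'M[F]_#|V|, inS adj A /\ x = \rank A)).
- by left.
- move=> x y Hx Hy /=; case: (leqP x y) => h.
    exact: Hx.
  exact: Hy.
- by move=> A HA; right; exists A.
Qed.
Definition pc (F : fieldType) (o : option F) (a : 'I_3) : F :=
  match o with None => if val a == 2%N then 1 else 0
  | Some t => if val a == 0%N then 1 else if val a == 1%N then t else t * t end.
Definition qc (F : fieldType) (o : option F) (a : 'I_3) : F :=
  match o with None => if val a == 0%N then 1 else 0
  | Some t => if val a == 0%N then t * t else if val a == 1%N then - ((1 + 1) * t) else 1 end.
Definition bb (F : fieldType) (o o' : option F) : F :=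
  match o, o' with None, None => 0 | Some t, Some u => (t - u) * (t - u) | _, _ => 1 end.

Lemma bbE (F : fieldType) (o o' : option F) : \sum_(a < 3) pc o a * qc o' a = bb o o'.
Proof.
rewrite !big_ord_recl big_ord0.
case: o => [t|]; case: o' => [u|] /=.
- exact: (gsq (Fring F)).
- by rewrite !(mul0r, mulr0, mul1r, mulr1, add0r, addr0).
- by rewrite !(mul0r, mulr0, mul1r, mulr1, add0r, addr0).
- by rewrite !(mul0r, mulr0, mul1r, mulr1, add0r, addr0).
Qed.

Lemma bbC (F : fieldType) (o o' : option F) : bb o o' = bb o' o.
Proof. case: o => [t|]; case: o' => [u|] //=; exact: (gsym (Fring F)). Qed.

Lemma bb_diag (F : fieldType) (o : option F) : bb o o = 0.
Proof. by case: o => [t|] //=; rewrite subrr mul0r. Qed.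

Lemma bb_neq0 (F : fieldType) (o o' : option F) : o != o' -> bb o o' != 0.
Proof.
case: o => [t|]; case: o' => [u|] //=; rewrite ?oner_neq0 // => h.
by rewrite mulf_neq0 // subr_eq0.
Qed.

Lemma construct (F : finFieldType) n (s : 'I_n -> nat) : (n <= #|F|.+1)%N ->
  exists A : 'M[F]_#|cmp_vertex s|, inS (@cmp_adj n s) A /\ (\rank A <= 3)%N.
Proof.
move=> hn.
have hn' : (n <= #|{: option F}|)%N by rewrite card_option.
pose g (i : 'I_n) : option F := enum_val (widen_ord hn' i).
have ginj : injective g by move=> i j /enum_val_inj /(congr1 val) /= /val_inj.
pose h (x : 'I_#|cmp_vertex s|) := g (tag (enum_val x)).
pose A := \matrix_(x, y) bb (h x) (h y).
exists A; split.
- apply/andP; split.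
    by apply/eqP/matrixP => x y; rewrite !mxE; exact: bbC.
  apply/forallP => x; apply/forallP => y; apply/implyP => _.
  rewrite mxE /cmp_adj.
  case: (eqVneq (tag (enum_val x)) (tag (enum_val y))) => e.
    by rewrite /h e bb_diag eqxx.
  have hxy : h x != h y by rewrite /h (inj_eq ginj).
  by rewrite (bb_neq0 hxy).
- have -> : A = (\matrix_(x, a) pc (h x) a) *m (\matrix_(a, y) qc (h y) a).
    apply/matrixP => x y; rewrite !mxE -bbE; apply: eq_bigr => a _; rewrite !mxE.
    by [].
  apply: leq_trans (mxrankM_maxr _ _) _; exact: rank_leq_row.
Qed.
Lemma zero_diag (F : fieldType) N (A : 'M[F]_N) k (x : 'I_k -> 'I_N) :
  (\rank A < k)%N -> (forall a b, a != b -> A (x a) (x b) = 0) ->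
  exists a, A (x a) (x a) = 0.
Proof.
move=> hr hoff.
case: (pickP (fun a => A (x a) (x a) == 0)) => [a /eqP ha | hnz]; first by exists a.
exfalso.
have hf : row_free (mxsub x x A).
  apply: inj_row_free => v hv; apply/rowP => b.
  have := congr1 (fun X : 'M[F]_(1, k) => X 0 b) hv; rewrite !mxE (bigD1 b) //= big1 => [|a hab].
    by rewrite !mxE addr0 => /eqP; rewrite mulf_eq0 hnz orbF => /eqP.
  by rewrite !mxE hoff ?mulr0.
have := rank_mxsub x x A; move: hf; rewrite /row_free => /eqP ->.
by move=> h; move: (leq_ltn_trans h hr); rewrite ltnn.
Qed.

Lemma ord4_cases (P : 'I_4 -> Prop) : P ord0 -> P (lift ord0 ord0) ->
  P (lift ord0 (lift ord0 ord0)) -> P (lift ord0 (lift ord0 (lift ord0 ord0))) -> forall a, P a.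
Proof.
move=> h0 h1 h2 h3 [[|[|[|[|m]]]] hm].
- by have -> : Ordinal hm = ord0 by apply: val_inj.
- by have -> : Ordinal hm = lift ord0 ord0 by apply: val_inj.
- by have -> : Ordinal hm = lift ord0 (lift ord0 ord0) by apply: val_inj.
- by have -> : Ordinal hm = lift ord0 (lift ord0 (lift ord0 ord0)) by apply: val_inj.
- by [].
Qed.

Lemma pf4 (F : fieldType) n (M : 'M[F]_n) (i1 i2 k l : 'I_n) :
  (1 + 1 = 0 :> F) -> (forall i j, M i j = M j i) -> (forall i, M i i = 0) ->
  (\rank M <= 3)%N ->
  M i1 i2 * M k l + M i1 k * M i2 l + M i1 l * M i2 k = 0.
Proof.
move=> H2 sym d hr.
pose idx (a : 'I_4) := if val a == 0%N then i1 else if val a == 1%N then i2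
   else if val a == 2%N then k else l.
apply/eqP; apply: contraT => hP.
have hf : row_free (mxsub idx idx M).
  apply: inj_row_free => v hv.
  have E : forall b, (v *m mxsub idx idx M) 0 b = 0 by move=> b; rewrite hv mxE.
  have := E (lift ord0 (lift ord0 (lift ord0 ord0))).
  have := E (lift ord0 (lift ord0 ord0)).
  have := E (lift ord0 ord0).
  have := E ord0.
  move=> e0 e1 e2 e3.
  rewrite !mxE !big_ord_recl !big_ord0 !mxE /idx /= in e0 e1 e2 e3.
  have [h0 h1 h2 h3] := gpf (Fring F) H2 (d _) (d _) (d _) (d _) (sym _ _) (sym _ _)
     (sym _ _) (sym _ _) (sym _ _) (sym _ _) e0 e1 e2 e3.
  apply/rowP; apply: ord4_cases; rewrite mxE; apply/eqP.
  - by move: h0 => /eqP; rewrite mulf_eq0 (negbTE hP) orbF.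
  - by move: h1 => /eqP; rewrite mulf_eq0 (negbTE hP) orbF.
  - by move: h2 => /eqP; rewrite mulf_eq0 (negbTE hP) orbF.
  - by move: h3 => /eqP; rewrite mulf_eq0 (negbTE hP) orbF.
have := rank_mxsub idx idx M; move: hf; rewrite /row_free => /eqP ->.
by move=> h; move: (leq_trans h hr).
Qed.
Lemma span3 (F : fieldType) n (M : 'M[F]_n) (i1 i2 i3 : 'I_n) :
  (1 + 1 != 0 :> F) -> (forall i j, M i j = M j i) -> (forall i, M i i = 0) ->
  M i1 i2 != 0 -> M i1 i3 != 0 -> M i2 i3 != 0 -> (\rank M <= 3)%N ->
  exists al be ga : 'I_n -> F, forall k j,
    M k j = al k * M i1 j + be k * M i2 j + ga k * M i3 j.
Proof.
move=> H2 sym d n12 n13 n23 hr.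
pose idx (a : 'I_3) := if val a == 0%N then i1 else if val a == 1%N then i2 else i3.
pose R := mxsub idx id M.
have hf : row_free R.
  apply: inj_row_free => v hv.
  have E : forall b, (v *m R) 0 b = 0 by move=> b; rewrite hv mxE.
  have e2 := E i3; have e1 := E i2; have e0 := E i1.
  rewrite !mxE !big_ord_recl !big_ord0 !mxE /idx /= in e0 e1 e2.
  have [h0 h1 h2] := gr3 (Fring F) (d _) (d _) (d _) (sym _ _) (sym _ _) (sym _ _) e0 e1 e2.
  have nz : forall x y w : F, x != 0 -> y != 0 -> (1 + 1) * x * y * w = 0 -> w = 0.
    by move=> x y w hx hy /eqP; rewrite !mulf_eq0 (negbTE H2) (negbTE hx) (negbTE hy) /= => /eqP.
  apply/rowP => a; rewrite mxE.
  case: a => [[|[|[|m]]] hm].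
  - have -> : Ordinal hm = ord0 by apply: val_inj.
    by apply: nz h0.
  - have -> : Ordinal hm = lift ord0 ord0 by apply: val_inj.
    by apply: nz h1.
  - have -> : Ordinal hm = lift ord0 (lift ord0 ord0) by apply: val_inj.
    by apply: nz h2.
  - by [].
have hRM : (R <= M)%MS by apply: rowsub_sub.
have hMR : (M <= R)%MS.
  rewrite -(mxrank_leqif_sup hRM).2 eqn_leq mxrankS //=.
  by move: hf; rewrite /row_free => /eqP ->.
case/submxP: hMR => D hD.
exists (fun k => D k ord0), (fun k => D k (lift ord0 ord0)),
  (fun k => D k (lift ord0 (lift ord0 ord0))) => k j.
by rewrite {1}hD !mxE !big_ord_recl !big_ord0 !mxE /idx /= addr0 addrA.
Qed.

Lemma keyK (F : finFieldType) n (M : 'M[F]_n) : (3 <= n)%N ->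
  (forall i j, M i j = M j i) -> (forall i, M i i = 0) ->
  (forall i j, i != j -> M i j != 0) -> (\rank M <= 3)%N -> (n <= #|F|.+1)%N.
Proof.
move=> hn sym d off hr.
have h0 : (0 < n)%N by apply: leq_trans hn.
have h1 : (1 < n)%N by apply: leq_trans hn.
have h2 : (2 < n)%N by [].
pose i1 := Ordinal h0; pose i2 := Ordinal h1; pose i3 := Ordinal h2.
have n12 : i1 != i2 by []. have n13 : i1 != i3 by []. have n23 : i2 != i3 by [].
suff [f finj] : exists f : 'I_n -> F, {in [set~ i1] &, injective f}.
  have := card_in_imset finj; rewrite cardsC1 card_ord => h.
  have := max_card (f @: [set~ i1]); rewrite h => h'.
  by rewrite -(prednK h0) ltnS.
have mz : forall k, k \in [set~ i1] -> M i1 k != 0.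
  by move=> k; rewrite in_setC1 => hk; apply: off; rewrite eq_sym.
case: (eqVneq (1 + 1 : F) 0) => H2.
- exists (fun k => M i2 k / M i1 k) => k l hk hl /= hkl.
  apply/eqP; apply: contraT => nkl.
  move/eqP: hkl; rewrite eqr_div ?mz // => /eqP hc.
  have := pf4 i1 i2 k l H2 sym d hr.
  rewrite (mulrC (M i1 l)) hc (mulrC (M i2 l)) -addrA.
  have -> : M i1 k * M i2 l + M i1 k * M i2 l = (1 + 1) * (M i1 k * M i2 l).
    by rewrite mulrDl mul1r.
  rewrite H2 mul0r addr0 => /eqP; rewrite mulf_eq0 (negbTE (off _ _ n12)).
  by rewrite (negbTE (off _ _ nkl)).
- have [al [be [ga hM]]] := span3 H2 sym d (off _ _ n12) (off _ _ n13) (off _ _ n23) hr.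
  have hm : forall k, M i1 k = be k * M i1 i2 + ga k * M i1 i3.
    by move=> k; rewrite [LHS]sym [LHS]hM d (sym i2 i1) (sym i3 i1) mulr0 add0r.
  have hM2 : forall l, M i2 l = al l * M i1 i2 + ga l * M i2 i3.
    by move=> l; rewrite [LHS]sym [LHS]hM d (sym i3 i2) mulr0 addr0.
  have hM3 : forall l, M i3 l = al l * M i1 i3 + be l * M i2 i3.
    by move=> l; rewrite [LHS]sym [LHS]hM d mulr0 addr0.
  have hG : forall k l, M k l =
      al k * (be l * M i1 i2 + ga l * M i1 i3) + be k * (al l * M i1 i2 + ga l * M i2 i3)
      + ga k * (al l * M i1 i3 + be l * M i2 i3).
    by move=> k l; rewrite [LHS]hM (hm l) (hM2 l) (hM3 l).
  have hZ : forall k, M i1 i2 * al k * be k + M i1 i3 * al k * ga k + M i2 i3 * be k * ga k = 0.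
    move=> k.
    have e : 0 = (1 + 1) * (M i1 i2 * al k * be k + M i1 i3 * al k * ga k + M i2 i3 * be k * ga k)
      := etrans (esym (d k)) (etrans (hG k k) (god0 (Fring F) _ _ _ _ _ _)).
    by move/esym/eqP: e; rewrite mulf_eq0 (negbTE H2) => /eqP.
  exists (fun k => be k / M i1 k) => k l hk hl /= hkl.
  apply/eqP; apply: contraT => nkl.
  move/eqP: hkl; rewrite eqr_div ?mz // => /eqP hc.
  have hg : ga k * M i1 l = ga l * M i1 k.
    apply/eqP; rewrite -subr_eq0.
    have := god1 (Fring F) (hm k) (hm l) hc.
    by move/eqP; rewrite mulf_eq0 (negbTE (off _ _ n13)).
  have ha : al k * M i1 l = al l * M i1 k.
    apply/eqP; rewrite -subr_eq0.
    have := god2 (Fring F) (hZ k) (hZ l) (hm k) (hm l) hc hg.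
    by move/eqP; rewrite !mulf_eq0 !(negbTE (mz _ hk)) (negbTE (mz _ hl)).
  have hkk := etrans (esym (hG k k)) (d k).
  have := god3 (Fring F) ha hc hg hkk.
  rewrite -hG => /eqP; rewrite mulf_eq0 (negbTE (mz _ hk)) /=.
  by rewrite (negbTE (off _ _ nkl)).
Qed.

Lemma part3 (F : finFieldType) n (s : 'I_n -> nat) (A : 'M[F]_#|cmp_vertex s|) :
  (3 <= n)%N -> (forall i, 4 <= s i)%N -> inS (@cmp_adj n s) A -> (\rank A <= 3)%N ->
  (n <= #|F|.+1)%N.
Proof.
move=> hn hs /andP [/eqP hT /forallP hA] hr.
have hA' : forall x y, x != y ->
    (A x y != 0) = (tag (enum_val x) != tag (enum_val y)).
  by move=> x y hxy; move: (hA x) => /forallP /(_ y) /implyP /(_ hxy) /eqP.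
have hsym : forall x y, A x y = A y x by move=> x y; rewrite -{1}hT mxE.
pose x (i : 'I_n) (a : 'I_4) : 'I_#|cmp_vertex s| :=
  enum_rank (Tagged (fun j => 'I_(s j)) (widen_ord (hs i) a)).
have tagx : forall i a, tag (enum_val (x i a)) = i by move=> i a; rewrite enum_rankK.
have ex : forall i, exists a, A (x i a) (x i a) = 0.
  move=> i; apply: zero_diag; first by apply: leq_ltn_trans hr _.
  move=> a b hab; apply/eqP.
  have hx : x i a != x i b.
    apply: contraNneq hab => /enum_rank_inj e0; have e := eq_from_Tagged e0.
    by apply/eqP; apply: val_inj; exact: (congr1 val e).
  by move: (hA' _ _ hx); rewrite !tagx eqxx => /negbT; rewrite negbK.
pose w i := x i (odflt ord0 [pick a | A (x i a) (x i a) == 0]).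
have dw : forall i, A (w i) (w i) = 0.
  move=> i; rewrite /w; case: pickP => [a /eqP // | h].
  by have [a ha] := ex i; move: (h a); rewrite ha eqxx.
have tagw : forall i, tag (enum_val (w i)) = i by move=> i; exact: tagx.
apply: (@keyK F n (mxsub w w A)) => //.
- by move=> i j; rewrite !mxE hsym.
- by move=> i; rewrite mxE dw.
- move=> i j hij; rewrite mxE.
  have ht : tag (enum_val (w i)) != tag (enum_val (w j)) by rewrite !tagw.
  have hw : w i != w j by apply: contraNneq ht => ->.
  by rewrite hA'.
- exact: leq_trans (rank_mxsub _ _ _) hr.
Qed.

Theorem mainTheorem19 (n : nat) (s : 'I_n -> nat) :
  (1 <= n)%N ->
  (forall i : 'I_n, ((n - 1) ^ 2 < s i)%N) ->
  forall F : finFieldType,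
    (mr F (@cmp_adj n s) <= 3)%N <-> (n - 1 <= #|F|)%N.
Proof.
move=> hn hs F; split.
- move=> hmr; case: (leqP 3 n) => h3; last first.
    have hF : (0 < #|F|)%N by apply/card_gt0P; exists 0.
    apply: leq_trans hF; by rewrite leq_subLR.
  have hs4 : forall i, (4 <= s i)%N.
    move=> i; apply: ltnW; apply: leq_ltn_trans (hs i).
    have h2 : (2 <= n - 1)%N by rewrite leq_subRL // (leq_trans _ h3).
    by rewrite -[4%N]/(2 ^ 2)%N leq_exp2r.
  case: (mr_cases F (@cmp_adj n s)) => [e | [A [hA e]]].
    exfalso; move: hmr; rewrite e.
    pose f (a : 'I_4) : cmp_vertex s :=
      Tagged (fun j => 'I_(s j)) (widen_ord (hs4 (Ordinal hn)) a).
    have finj : injective f.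
      by move=> a b e0; have e' := eq_from_Tagged e0; apply: val_inj; exact: (congr1 val e').
    have := @leq_card _ _ f finj; rewrite card_ord => h4 h.
    by move: (leq_trans h4 h).
  rewrite e in hmr; have := part3 h3 hs4 hA hmr.
  by rewrite leq_subLR add1n.
- move=> h.
  have hn1 : (n <= #|F|.+1)%N by rewrite -add1n -leq_subLR.
  have [A [hA hr]] := @construct F n s hn1.
  exact: leq_trans (mr_le hA) hr.
Qed.
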